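(* Let $k\ge2$ and let $B=M\cup\{\omega\}$ where $\omega\in P_k\setminus M$ has $q\ge 1$ arguments. Let $s,m,n\ge 1$, and for each $i=1,\ldots,s$ let $F_i=\{f_{i1},\ldots,f_{im}\}$ be a system of $m$ functions from $P_k(n)$. Then there exist functions $g_1,\ldots,g_m\in P_k(s+n)$ such that for every $j=1,\ldots,m$ the function $g_j$ is an $s$-connector for the tuple $(f_{1j},\ldots,f_{sj})$, and $$I_B(\{g_1,\ldots,g_m\})\le\max\{I_B(F_1),\ldots,I_B(F_s)\}.$$
   Context: Let $k\ge 2$ be an integer and $E_k=\{0,1,\ldots,k-1\}$. $P_k(n)$ denotes the set of all functions $E_k^n\to E_k$, and $P_k=\bigcup_n P_k(n)$. Tuples are ordered componentwise. A function $f$ is monotone if $\tilde\alpha\le\tilde\beta$ implies $f(\tilde\alpha)\le f(\tilde\beta)$; $M$ is the set of all monotone functions in $P_k$ (of all arities, including constants). A basis is a set $B=M\cup\{\omega_1,\ldots,\omega_p\}$ with $p\ge1$ and $\omega_i\in P_k\setminus M$. A circuit over $B$ with inputs $x_1,\ldots,x_n$ is a finite directed acyclic graph whose source nodes are labelled by the variables $x_1,\ldots,x_n$ and each of whose other nodes (gates) is labelled by a $q$-ary function from $B$ and has $q$ ordered incoming edges; each node computes a function of $P_k(n)$ in the obvious way. A circuit realizes a system $F$ of functions of $x_1,\ldots,x_n$ if every function of $F$ is computed at some node. Gates labelled by functions of $M$ have weight $0$, gates labelled by some $\omega_i$ have weight $1$. The non-monotone complexity $I_B(S)$ of a circuit $S$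 is the sum of the weights of its gates; $I_B(F)$ is the minimum of $I_B(S)$ over all circuits $S$ over $B$ realizing $F$. For functions $f_1,\ldots,f_s\in P_k(n)$, an $s$-connector for the tuple $(f_1,\ldots,f_s)$ is a function $g(z_1,\ldots,z_s,x_1,\ldots,x_n)\in P_k(s+n)$ such that for each $i=1,\ldots,s$ and all $(x_1,\ldots,x_n)\in E_k^n$, $g(\tilde e_i,x_1,\ldots,x_n)=f_i(x_1,\ldots,x_n)$, where $\tilde e_i\in E_k^s$ is the tuple with $1$ in position $i$ and $0$ elsewhere. *)

(* Defs.v *)
From mathcomp Require Import all_boot.
Set Implicit Arguments. Unset Strict Implicit. Unset Printing Implicit Defensive.

(* E_k = 'I_k ; a function of P_k(n) is a map ('I_n -> 'I_k) -> 'I_k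
   (tuples in E_k^n are represented as maps 'I_n -> 'I_k). *)
Definition fn (k n : nat) := ('I_n -> 'I_k) -> 'I_k.

Definition monotone (k q : nat) (h : fn k q) : Prop :=
  forall a b : 'I_q -> 'I_k, (forall j, a j <= b j) -> h a <= h b.

(* A gate over the basis B = M ∪ {w} (w of arity qw), placed in a circuit
   that already has m nodes; its ordered inputs are indices of earlier nodes. *)
Inductive gate (k qw m : nat) : Type :=
| MonGate (q : nat) (h : fn k q) of monotone h & ('I_q -> 'I_m)
| OmegaGate of ('I_qw -> 'I_m).

(* A circuit with inputs x_1..x_n and N nodes in total (the n source nodes
   come first, then the gates in a topological order). *)
Inductive circuit (k qw n : nat) : nat -> Type :=
| Inputs : circuit k qw n n
| AddGate (m : nat) of circuit k qw n m & gate k qw m : circuit k qw n m.+1.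

Definition gate_val (k qw m : nat) (w : fn k qw) (g : gate k qw m)
  (v : 'I_m -> 'I_k) : 'I_k :=
  match g with
  | MonGate q h _ a => h (fun j => v (a j))
  | OmegaGate a => w (fun j => v (a j))
  end.

Fixpoint eval (k qw n : nat) (w : fn k qw) (N : nat) (c : circuit k qw n N)
  : ('I_n -> 'I_k) -> 'I_N -> 'I_k :=
  match c in circuit _ _ _ N return ('I_n -> 'I_k) -> 'I_N -> 'I_k with
  | Inputs => fun x => x
  | AddGate m c' g => fun x i =>
      match unlift ord_max i with
      | Some j => eval w c' x j
      | None => gate_val w g (eval w c' x)
      end
  end.

Fixpoint cost (k qw n : nat) (N : nat) (c : circuit k qw n N) : nat :=
  match c with
  | Inputs => 0
  | AddGate _ c' g => cost c' + (if g is OmegaGate _ then 1 else 0)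
  end.

Definition computes (k qw n : nat) (w : fn k qw) (N : nat)
  (c : circuit k qw n N) (f : fn k n) : Prop :=
  exists i : 'I_N, forall x, eval w c x i = f x.

Definition realizes (k qw n : nat) (w : fn k qw) (N : nat)
  (c : circuit k qw n N) (mF : nat) (F : 'I_mF -> fn k n) : Prop :=
  forall j, computes w c (F j).

(* "I_B(F) <= c", where I_B(F) is the minimum of I_B(S) over circuits S
   over B = M ∪ {w} realizing F (and +oo if there is none). *)
Definition IB_le (k qw n : nat) (w : fn k qw) (mF : nat)
  (F : 'I_mF -> fn k n) (c : nat) : Prop :=
  exists (N : nat) (S : circuit k qw n N), realizes w S F /\ cost S <= c.

(* g(z_1..z_s, x_1..x_n) is an s-connector for (F 1, ..., F s):
   g(e_i, x) = F_i(x).  Inputs of g are indexed by 'I_(s+n); the first s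
   are the z's (lshift), the last n the x's (rshift). *)
Definition connector (k s n : nat) (F : 'I_s -> fn k n) (g : fn k (s + n))
  : Prop :=
  forall (i : 'I_s) (x : 'I_n -> 'I_k) (y : 'I_(s + n) -> 'I_k),
    (forall a : 'I_s, nat_of_ord (y (lshift n a)) = nat_of_bool (a == i)) ->
    (forall b : 'I_n, y (rshift s b) = x b) ->
    g y = F i x.

(* Main.v *)
Require Import Defs.
From mathcomp Require Import all_boot zify.
From Stdlib Require Import Classical IndefiniteDescription FunctionalExtensionality.
Set Implicit Arguments. Unset Strict Implicit. Unset Printing Implicit Defensive.

Section Analysis.
Variables (k qw : nat) (w : fn k qw) (d : 'I_k) (n : nat).

Fixpoint evalo N (c : circuit k qw n N) (x : 'I_n -> 'I_k) (o : nat -> 'I_k)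
  : 'I_N -> 'I_k :=
  match c in circuit _ _ _ N return 'I_N -> 'I_k with
  | Inputs => x
  | AddGate m c' g => fun i =>
     match unlift ord_max i with
     | Some j => evalo c' x o j
     | None => match g with
               | MonGate q h _ a => h (fun j => evalo c' x o (a j))
               | OmegaGate _ => o (cost c') end
     end
  end.

Lemma evalo_mono N (c : circuit k qw n N) (x x' : 'I_n -> 'I_k) (o o' : nat -> 'I_k) :
  (forall b, x b <= x' b) -> (forall t, o t <= o' t) ->
  forall i, evalo c x o i <= evalo c x' o' i.
Proof.
move=> Hx Ho; elim: c => [|m c IH g] i /=; first exact: Hx.
case: (unlift ord_max i) => [j|]; first exact: IH.
case: g => [q h hm a|a] //; by apply: hm => j.
Qed.

Lemma evalo_ext N (c : circuit k qw n N) x o o' :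
  (forall t, t < cost c -> o t = o' t) -> forall i, evalo c x o i = evalo c x o' i.
Proof.
elim: c => [|m c IH g] Ho i //=.
have H' : forall t, t < cost c -> o t = o' t.
  by move=> t Ht; apply: Ho; apply: leq_trans Ht (leq_addr _ _).
case: (unlift ord_max i) => [j|]; first exact: IH.
case: g Ho => [q h hm a|a] Ho.
  by congr h; apply: functional_extensionality => j; apply: IH.
by apply: Ho => /=; rewrite addn1.
Qed.

Fixpoint oval N (c : circuit k qw n N) (x : 'I_n -> 'I_k) : nat -> 'I_k :=
  match c with
  | Inputs => fun _ => d
  | AddGate m c' g => fun t => if t < cost c' then oval c' x t else
      match g with OmegaGate a => w (fun p => eval w c' x (a p)) | _ => d end
  end.

Lemma eval_evalo N (c : circuit k qw n N) x i :
  eval w c x i = evalo c x (oval c x) i.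
Proof.
elim: c i => [|m c IH g] i //=.
have E : forall j, evalo c x (oval c x) j =
   evalo c x (fun t => if t < cost c then oval c x t else
      match g with OmegaGate a => w (fun p => eval w c x (a p)) | _ => d end) j.
  by apply: evalo_ext => t ->.
case: (unlift ord_max i) => [j|]; first by rewrite IH E.
case: g E => [q h hm a|a] E /=.
  by congr h; apply: functional_extensionality => j; rewrite IH E.
by rewrite ltnn.
Qed.

Fixpoint arg N (c : circuit k qw n N) (t : nat) (p : 'I_qw) x o : 'I_k :=
  match c with
  | Inputs => d
  | AddGate m c' g => if t < cost c' then arg c' t p x o else
      match g with OmegaGate a => evalo c' x o (a p) | _ => d end
  end.

Lemma arg_mono N (c : circuit k qw n N) t p (x x' : 'I_n -> 'I_k) (o o' : nat -> 'I_k) :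
  (forall b, x b <= x' b) -> (forall t, o t <= o' t) ->
  arg c t p x o <= arg c t p x' o'.
Proof.
move=> Hx Ho; elim: c => [|m c IH g] //=.
case: ifP => // _; case: g => // a; exact: evalo_mono.
Qed.

Lemma arg_ext N (c : circuit k qw n N) t p x o o' :
  (forall t', t' < t -> o t' = o' t') -> arg c t p x o = arg c t p x o'.
Proof.
move=> Ho; elim: c => [|m c IH g] //=.
case: ifP => // Ht; case: g => // a; apply: evalo_ext => t' H; apply: Ho.
by apply: leq_trans H _; rewrite leqNgt Ht.
Qed.

Lemma oval_arg N (c : circuit k qw n N) x t : t < cost c ->
  oval c x t = w (fun p => arg c t p x (oval c x)).
Proof.
elim: c => [|m c IH g] //= Ht.
case: ifP => Htc.
  rewrite IH //; congr w; apply: functional_extensionality => p.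
  by apply: arg_ext => t' Ht'; rewrite (ltn_trans Ht' Htc).
case: g Ht => [q h hm a|a] Ht; first by rewrite addn0 Htc in Ht.
congr w; apply: functional_extensionality => p.
rewrite eval_evalo; apply: evalo_ext => t' ->; done.
Qed.
End Analysis.

Section Build.
Variables (k qw : nat) (w : fn k qw) (d : 'I_k).

Definition monoN (h : (nat -> 'I_k) -> 'I_k) :=
  forall V V' : nat -> 'I_k, (forall i, V i <= V' i) -> h V <= h V'.

Inductive instr :=
| IMon (h : (nat -> 'I_k) -> 'I_k) of monoN h
| IOm of ('I_qw -> nat).

Definition isOm (i : instr) : bool := if i is IOm _ then true else false.

Definition vnat M (v : 'I_M -> 'I_k) (j : nat) : 'I_k :=
  oapp v d (insub j : option 'I_M).

Lemma vnatE M (v : 'I_M -> 'I_k) (o : 'I_M) : vnat v o = v o.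
Proof. by rewrite /vnat valK. Qed.

Lemma vnat_out M (v : 'I_M -> 'I_k) j : M <= j -> vnat v j = d.
Proof. by move=> H; rewrite /vnat insubN // -leqNgt. Qed.

Lemma vnat_mono M (v v' : 'I_M -> 'I_k) : (forall i, v i <= v' i) ->
  forall j, vnat v j <= vnat v' j.
Proof. by move=> H j; rewrite /vnat; case: insubP => //= o. Qed.

Definition mkgate M (HM : 0 < M) (ins : instr) : gate k qw M :=
  match ins with
  | IMon h hm => @MonGate k qw M M (fun v => h (vnat v))
        (fun a b H => hm _ _ (vnat_mono H)) id
  | IOm a => OmegaGate k (fun p => insubd (Ordinal HM) (a p))
  end.

Definition ival (ins : instr) (V : nat -> 'I_k) : 'I_k :=
  match ins with IMon h _ => h V | IOm a => w (fun p => V (a p)) end.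

Lemma mkgateE M (HM : 0 < M) ins v :
  (forall a p, ins = IOm a -> a p < M) ->
  gate_val w (mkgate HM ins) v = ival ins (vnat v).
Proof.
case: ins => [h hm|a] H //=.
congr w; apply: functional_extensionality => p.
have Hp := H a p erefl.
by rewrite /vnat /insubd; case: insubP => //=; rewrite Hp.
Qed.

Lemma vnat_add n' M (c : circuit k qw n' M) g y j :
  vnat (eval w (AddGate c g) y) j =
  if j < M then vnat (eval w c y) j else if j == M then gate_val w g (eval w c y)
  else d.
Proof.
case: ltngtP => Hj.
- have Hj' : j < M.+1 by apply: ltnW.
  rewrite -[j]/(val (Ordinal Hj')) vnatE /=.
  case: unliftP => [j' |] E.
    have -> : j = j' by move: (congr1 val E) => /= ->; rewrite /bump leqNgt ltn_ord.
    by rewrite vnatE.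
  by move: (congr1 val E) => /= Ej; rewrite Ej ltnn in Hj.
- by rewrite vnat_out.
- subst j; rewrite -[M]/(val (@ord_max M)) vnatE /= unlift_none //.
Qed.

Variables (n' : nat) (Hn' : 0 < n') (prog : seq instr).
Definition dI : instr := IOm (fun _ => 0).

Lemma posM N : 0 < N + n'. Proof. by rewrite addn_gt0 Hn' orbT. Qed.

Fixpoint build (N : nat) : circuit k qw n' (N + n') :=
  match N with
  | 0 => Inputs k qw n'
  | N1.+1 => AddGate (build N1) (mkgate (posM N1) (nth dI prog N1))
  end.

Lemma build_inputs N y (o : 'I_n') : vnat (eval w (build N) y) o = y o.
Proof.
elim: N => [|N IH] /=; first by rewrite vnatE.
rewrite vnat_add ifT //; apply: leq_trans (ltn_ord o) _; exact: leq_addl.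
Qed.

Lemma build_prefix N1 N2 y j : N1 <= N2 -> j < N1 + n' ->
  vnat (eval w (build N2) y) j = vnat (eval w (build N1) y) j.
Proof.
move=> H12 Hj; elim: N2 H12 => [|N2 IH] H12.
  by move: H12; rewrite leqn0 => /eqP ->.
case: (leqP N1 N2) => H.
  rewrite /= vnat_add ifT ?IH //; apply: leq_trans Hj _; by rewrite leq_add2r.
have -> : N1 = N2.+1 by apply/eqP; rewrite eqn_leq H12 H.
done.
Qed.

Lemma build_top N y :
  (forall a p, nth dI prog N = IOm a -> a p < N + n') ->
  vnat (eval w (build N.+1) y) (N + n') = ival (nth dI prog N) (vnat (eval w (build N) y)).
Proof.
move=> H; rewrite /= vnat_add ltnn eqxx; exact: mkgateE.
Qed.

Lemma build_cost N : N <= size prog -> cost (build N) = count isOm (take N prog).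
Proof.
elim: N => [|N IH] H /=; first by rewrite take0.
rewrite IH ?(ltnW H) // (take_nth dI H) -cats1 count_cat /=.
by case: (nth dI prog N).
Qed.

End Build.

Section Comb.
Variables (k qw : nat) (w : fn k qw) (d : 'I_k).
Variables (s n m C : nat) (Ni : 'I_s -> nat) (S : forall i, circuit k qw n (Ni i))
  (node : forall i, 'I_m -> 'I_(Ni i)).

Definition xv (V : nat -> 'I_k) : 'I_n -> 'I_k := fun b => V (s + b).
Definition om t := t * qw.+1 + qw + (s + n).
Definition ov t0 (V : nat -> 'I_k) : nat -> 'I_k :=
  fun t' => if t' < t0 then V (om t') else d.
Definition toI (x : nat) : 'I_k := insubd d x.
Definition msel (V : nat -> 'I_k) (F : 'I_s -> nat) : nat :=
  \max_(i < s) (if 0 < V i then F i else 0).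

Lemma msel_mono (V V' : nat -> 'I_k) (F F' : 'I_s -> nat) : (forall i, V i <= V' i) -> (forall i, F i <= F' i) ->
  msel V F <= msel V' F'.
Proof.
move=> HV HF; apply/bigmax_leqP => i _.
apply: leq_trans (leq_bigmax i).
case: ifP => H //; rewrite (leq_trans H (HV i)); exact: HF.
Qed.

Lemma msel_lt (V : nat -> 'I_k) (F : 'I_s -> 'I_k) : 0 < k -> msel V (fun i => F i) < k.
Proof.
move=> Hk; rewrite /msel; elim/big_ind: _ => //.
  by move=> a b Ha Hb; rewrite gtn_max Ha Hb.
by move=> i _; case: ifP.
Qed.

Lemma toI_mono x y : y < k -> x <= y -> toI x <= toI y.
Proof.
move=> Hy Hxy; rewrite /toI !val_insubd Hy (leq_ltn_trans Hxy Hy) //.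
Qed.

Lemma toI_val (a : 'I_k) : toI a = a. Proof. exact: valKd. Qed.

Lemma msel_e (V : nat -> 'I_k) (F : 'I_s -> nat) (i : 'I_s) : (forall a : 'I_s, nat_of_ord (V a) = (a == i)) ->
  msel V F = F i.
Proof.
move=> HV; rewrite /msel (bigD1 i) //= HV eqxx /= big1 ?maxn0 //.
by move=> j /negbTE Hj; rewrite HV Hj.
Qed.

Lemma xv_mono (V V' : nat -> 'I_k) : (forall i, V i <= V' i) -> forall b, xv V b <= xv V' b.
Proof. by move=> H b; apply: H. Qed.

Lemma ov_mono t (V V' : nat -> 'I_k) : (forall i, V i <= V' i) -> forall t', ov t V t' <= ov t V' t'.
Proof. by move=> H t'; rewrite /ov; case: ifP. Qed.

Definition argh (t : nat) (p : 'I_qw) (V : nat -> 'I_k) : 'I_k :=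
  toI (msel V (fun i => arg d (S i) t p (xv V) (ov t V))).

Hypothesis Hk : 0 < k.

Lemma argh_mono t p : monoN (argh t p).
Proof.
move=> V V' H; apply: toI_mono; first exact: msel_lt.
apply: msel_mono => // i; apply: arg_mono; [exact: xv_mono | exact: ov_mono].
Qed.

Definition outh (j : 'I_m) (V : nat -> 'I_k) : 'I_k :=
  toI (msel V (fun i => evalo (S i) (xv V) (ov C V) (node i j))).

Lemma outh_mono j : monoN (outh j).
Proof.
move=> V V' H; apply: toI_mono; first exact: msel_lt.
apply: msel_mono => // i; apply: evalo_mono; [exact: xv_mono | exact: ov_mono].
Qed.

Definition stage t : seq (instr k qw) :=
  [seq @IMon k qw (argh t p) (argh_mono t p) | p <- enum 'I_qw] ++
  [:: IOm k (fun p : 'I_qw => t * qw.+1 + p + (s + n))].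

Definition outs : seq (instr k qw) :=
  [seq @IMon k qw (outh j) (outh_mono j) | j <- enum 'I_m].

Definition prog := flatten [seq stage t | t <- iota 0 C] ++ outs.

Lemma size_stage t : size (stage t) = qw.+1.
Proof. by rewrite size_cat size_map size_enum_ord addn1. Qed.

Lemma size_stages ts : size (flatten [seq stage t | t <- ts]) = size ts * qw.+1.
Proof. by elim: ts => //= a ts IH; rewrite size_cat IH size_stage mulSn. Qed.

Lemma count_stages ts : count (@isOm k qw) (flatten [seq stage t | t <- ts]) = size ts.
Proof.
elim: ts => //= a ts IH; rewrite count_cat IH count_cat count_map /=.
by rewrite (eq_count (a2 := pred0)) // count_pred0.
Qed.

Lemma nth_stages ts i p : i < size ts -> p < qw.+1 ->
  nth (dI k qw) (flatten [seq stage t | t <- ts]) (i * qw.+1 + p) =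
  nth (dI k qw) (stage (nth 0 ts i)) p.
Proof.
elim: ts i => // a ts IH [|i] Hi Hp /=; rewrite nth_cat size_stage.
  by rewrite mul0n add0n Hp.
rewrite mulSn -addnA ltnNge leq_addr /= addKn; exact: IH.
Qed.

Lemma size_prog : size prog = C * qw.+1 + m.
Proof. by rewrite size_cat size_stages size_iota size_map size_enum_ord. Qed.

Lemma prog_arg t (p : 'I_qw) : t < C ->
  nth (dI k qw) prog (t * qw.+1 + p) = @IMon k qw (argh t p) (argh_mono t p).
Proof.
move=> Ht; rewrite nth_cat size_stages size_iota.
have Hp := ltn_ord p; have -> : t * qw.+1 + p < C * qw.+1 by nia.
rewrite nth_stages ?size_iota ?nth_iota ?add0n //; last exact: ltnW.
rewrite nth_cat size_map size_enum_ord ltn_ord.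
by rewrite (nth_map p) ?size_enum_ord // nth_ord_enum.
Qed.

Lemma prog_om t : t < C ->
  nth (dI k qw) prog (t * qw.+1 + qw) = IOm k (fun p : 'I_qw => t * qw.+1 + p + (s + n)).
Proof.
move=> Ht; rewrite nth_cat size_stages size_iota.
have -> : t * qw.+1 + qw < C * qw.+1 by nia.
rewrite nth_stages ?size_iota ?nth_iota // add0n nth_cat size_map size_enum_ord ltnn.
by rewrite subnn.
Qed.

Lemma prog_out (j : 'I_m) :
  nth (dI k qw) prog (C * qw.+1 + j) = @IMon k qw (outh j) (outh_mono j).
Proof.
rewrite nth_cat size_stages size_iota ltnNge leq_addr /= addKn.
by rewrite (nth_map j) ?size_enum_ord // nth_ord_enum.
Qed.

Lemma count_prog : count (@isOm k qw) prog = C.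
Proof.
rewrite count_cat count_stages size_iota count_map.
by rewrite (eq_count (a2 := pred0)) // count_pred0 addn0.
Qed.

Hypothesis Hn' : 0 < s + n.

Definition Ptot := build d Hn' prog (size prog).
Definition Vy y := vnat d (eval w Ptot y).

Lemma V_pre N y j : N <= size prog -> j < N + (s + n) ->
  vnat d (eval w (build d Hn' prog N) y) j = Vy y j.
Proof. by move=> H1 H2; rewrite /Vy /Ptot; symmetry; apply: build_prefix. Qed.

Lemma V_step N y : N < size prog ->
  (forall a p, nth (dI k qw) prog N = IOm k a -> a p < N + (s + n)) ->
  Vy y (N + (s + n)) = ival w (nth (dI k qw) prog N) (vnat d (eval w (build d Hn' prog N) y)).
Proof.
move=> H1 H2; rewrite -(V_pre y H1); last by rewrite addSn.
exact: build_top.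
Qed.

Lemma argh_loc t p (P V : nat -> 'I_k) :
  (forall j, j < t * qw.+1 + (s + n) -> P j = V j) -> argh t p P = argh t p V.
Proof.
move=> H; rewrite /argh /msel.
have -> : xv P = xv V.
  apply: functional_extensionality => b; apply: H; have := ltn_ord b; lia.
have -> : ov t P = ov t V.
  apply: functional_extensionality => t'; rewrite /ov; case: ifP => // Ht.
  apply: H; rewrite /om; nia.
congr toI; apply: eq_bigr => i _; rewrite H //; have := ltn_ord i; lia.
Qed.

Lemma outh_loc j (P V : nat -> 'I_k) :
  (forall j, j < C * qw.+1 + (s + n) -> P j = V j) -> outh j P = outh j V.
Proof.
move=> H; rewrite /outh /msel.
have -> : xv P = xv V.
  apply: functional_extensionality => b; apply: H; have := ltn_ord b; lia.
have -> : ov C P = ov C V.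
  apply: functional_extensionality => t'; rewrite /ov; case: ifP => // Ht.
  apply: H; rewrite /om; nia.
congr toI; apply: eq_bigr => i _; rewrite H //; have := ltn_ord i; lia.
Qed.

Variables (y : 'I_(s + n) -> 'I_k) (i : 'I_s) (x : 'I_n -> 'I_k).
Hypothesis Hz : forall a : 'I_s, nat_of_ord (y (lshift n a)) = (a == i).
Hypothesis Hx : forall b : 'I_n, y (rshift s b) = x b.
Hypothesis Hcost : forall i, cost (S i) <= C.

Lemma Vy_z (a : 'I_s) : nat_of_ord (Vy y a) = (a == i).
Proof.
by rewrite -Hz /Vy /Ptot -[nat_of_ord a]/(nat_of_ord (lshift n a)) build_inputs.
Qed.

Lemma xv_Vy : xv (Vy y) = x.
Proof.
apply: functional_extensionality => b; rewrite /xv -Hx /Vy /Ptot.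
by rewrite -[s + b]/(nat_of_ord (rshift s b)) build_inputs.
Qed.

Lemma om_val t : t < C -> t < cost (S i) -> Vy y (om t) = oval w d (S i) x t.
Proof.
suff: forall T t, t < T -> t < C -> t < cost (S i) -> Vy y (om t) = oval w d (S i) x t.
  by move=> H; apply: H (ltnSn t).
elim=> // T IH {}t HtT Ht Htc.
have Hsz := size_prog.
rewrite /om V_step ?prog_om //; first last.
- by move=> a p [<-]; have := ltn_ord p; lia.
- by rewrite Hsz; nia.
rewrite (oval_arg _ _ _ Htc) /=; congr w; apply: functional_extensionality => p.
have Hp := ltn_ord p.
rewrite V_pre; last (by lia); last by rewrite Hsz; nia.
rewrite V_step ?prog_arg //; last by rewrite Hsz; nia.
rewrite /= (@argh_loc _ _ _ (Vy y)); last first.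
  by move=> j Hj; apply: V_pre; [rewrite Hsz; nia | lia].
rewrite /argh (msel_e _ Vy_z) toI_val xv_Vy; apply: arg_ext => t' Ht'.
rewrite /ov Ht' IH //; [exact: leq_trans Ht' HtT | exact: ltn_trans Ht' Ht
  | exact: ltn_trans Ht' Htc].
Qed.

Lemma out_val (j : 'I_m) : Vy y (C * qw.+1 + j + (s + n)) = eval w (S i) x (node i j).
Proof.
have Hsz := size_prog.
rewrite V_step ?prog_out //; last by rewrite Hsz; have := ltn_ord j; lia.
rewrite /= (@outh_loc _ _ (Vy y)); last first.
  by move=> j' Hj; apply: V_pre; [rewrite Hsz; have := ltn_ord j; lia | lia].
rewrite /outh (msel_e _ Vy_z) toI_val xv_Vy (eval_evalo w d); apply: evalo_ext => t Ht.
rewrite /ov (leq_trans Ht (Hcost i)) om_val //; exact: leq_trans Ht (Hcost i).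
Qed.

Lemma cost_Ptot : cost Ptot = C.
Proof. by rewrite /Ptot build_cost // take_size count_prog. Qed.

End Comb.

Lemma ex_min_prop (P : nat -> Prop) : (exists n, P n) ->
  exists n, P n /\ forall m, P m -> n <= m.
Proof.
move=> [n0 Hn].
suff: forall N n, n <= N -> P n -> exists n, P n /\ forall m, P m -> n <= m.
  by move=> H; apply: (H n0 n0).
elim=> [|N IH] n Hn' Pn.
  by exists n; split => // m _; move: Hn'; rewrite leqn0 => /eqP ->.
case: (classic (exists m, m < n /\ P m)) => [[m [Hm Pm]]|H].
  by apply: (IH m) => //; lia.
exists n; split => // m Pm; case: (leqP n m) => // Hmn.
by exfalso; apply: H; exists m.
Qed.

Theorem lemma2 (k qw : nat) (w : fn k qw) (hk : 2 <= k) (hqw : 1 <= qw)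
  (hw : ~ monotone w) (s m n : nat) (hs : 1 <= s) (hm : 1 <= m) (hn : 1 <= n)
  (f : 'I_s -> 'I_m -> fn k n) :
  exists g : 'I_m -> fn k (s + n),
    (forall j : 'I_m, connector (fun i => f i j) (g j)) /\
    (forall c : nat, (forall i : 'I_s, IB_le w (f i) c) -> IB_le w g c).
Proof.
have Hk : 0 < k by apply: ltnW.
pose d : 'I_k := Ordinal Hk.
have Hn' : 0 < s + n by lia.
case: (classic (exists c, forall i, IB_le w (f i) c)) => [Hex|Hnex]; last first.
  pose i0 : 'I_s := Ordinal hs.
  pose pk (y : 'I_(s + n) -> 'I_k) : 'I_s :=
    odflt i0 [pick i | [forall a, nat_of_ord (y (lshift n a)) == (a == i)]].
  exists (fun j y => f (pk y) j (fun b => y (rshift s b))); split.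
    move=> j i x y Hz Hx; rewrite /pk.
    have -> : (fun b => y (rshift s b)) = x.
      by apply: functional_extensionality => b.
    case: pickP => [i' /forallP H /=|H].
      have := H i; rewrite Hz eqxx; case: (i =P i') => [-> //|]; done.
    exfalso; move: (H i) => /negP; apply; apply/forallP => a; rewrite Hz.
    done.
  by move=> c Hc; exfalso; apply: Hnex; exists c.
have [c0 [Hc0 Hmin]] := ex_min_prop Hex.
have HS : forall i, {N : nat & {S : circuit k qw n N | realizes w S (f i) /\ cost S <= c0}}.
  move=> i; have [N HN] := constructive_indefinite_description _ (Hc0 i).
  by exists N; apply: constructive_indefinite_description.
pose Ni i := projT1 (HS i).
pose S i : circuit k qw n (Ni i) := proj1_sig (projT2 (HS i)).
have HSr : forall i, realizes w (S i) (f i) by move=> i; case: (proj2_sig (projT2 (HS i))).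
have Hcost : forall i, cost (S i) <= c0 by move=> i; case: (proj2_sig (projT2 (HS i))).
pose node i j : 'I_(Ni i) := proj1_sig (constructive_indefinite_description _ (HSr i j)).
have Hnode : forall i j x, eval w (S i) x (node i j) = f i j x.
  by move=> i j x; rewrite /node; case: constructive_indefinite_description.
pose g j y := Vy w d c0 S node Hk Hn' y (c0 * qw.+1 + j + (s + n)).
exists g; split.
  move=> j i x y Hz Hx; rewrite /g (out_val _ _ _ _ _ Hz Hx Hcost) //.
move=> c Hc; have Hc0c := Hmin c Hc.
exists _, (Ptot d c0 S node Hk Hn'); split; last by rewrite cost_Ptot.
move=> j.
have Hj : c0 * qw.+1 + j + (s + n) < size (prog d c0 S node Hk) + (s + n).
  by rewrite size_prog; have := ltn_ord j; lia.
by exists (Ordinal Hj) => y; rewrite /g /Vy -(vnatE d).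
Qed.
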